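(* For every integer $n \geq 1$, $$\sum_{\pi \vdash n} t(\pi) = \sum_{\pi \in V} (-1)^{h(\pi)}\, p(n - |\pi|).$$
   Context: $p(m)$ is the number of partitions of $m$, with $p(0)=1$ and $p(m)=0$ for $m<0$; $|\pi|$ is the sum of the parts of $\pi$. For a partition $\pi$, $f_i$ denotes the number of times $i$ appears as a part, and $t(\pi)$ is the nonnegative integer such that $f_i$ is odd for all $1 \leq i \leq t(\pi)$ and $f_{t(\pi)+1}$ is even (possibly zero). A $C$-partition is a partition $\pi$ such that whenever $i$ is a part of $\pi$, every positive integer less than $i$ is also a part of $\pi$. $V$ is the set of all nonempty $C$-partitions. For a partition $\pi$, $h(\pi)$ is the number of distinct part sizes of $\pi$ that occur with an even (positive) frequency. *)

(* Defs.v *)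
(* Partitions are represented as nonincreasing sequences of
   positive naturals (the parts). *)
From mathcomp Require Import all_boot all_algebra.
Set Implicit Arguments. Unset Strict Implicit. Unset Printing Implicit Defensive.

Definition is_partition (s : seq nat) : bool :=
  sorted geq s && all (fun x => 0 < x) s.

Definition psize (s : seq nat) : nat := sumn s.

Definition mult (s : seq nat) (i : nat) : nat := count_mem i s.

(* Every partition of m
   has at most m parts, each at most m, so it is obtained from some m-tuple with
   entries in {0..m} by deleting the zeros. *)
Definition partitions (m : nat) : seq (seq nat) :=
  [seq s <- undup [seq [seq x <- map (@nat_of_ord m.+1) (tval t) | 0 < x]
                  | t : m.-tuple 'I_m.+1]
   | is_partition s && (psize s == m)].

Definition npart (m : nat) : nat := size (partitions m).

(* t(pi): the least k >= 0 such that f_{k+1} is even; then f_i is odd for all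
   1 <= i <= k.  The search range 0..|pi| suffices since f_{|pi|+1} = 0. *)
Definition tpi (s : seq nat) : nat :=
  find (fun k => ~~ odd (mult s k.+1)) (iota 0 (psize s).+1).

Definition is_Cpartition (s : seq nat) : bool :=
  all (fun i => all (fun j => j \in s) (iota 1 i.-1)) s.

Definition hpi (s : seq nat) : nat :=
  count (fun i => ~~ odd (mult s i)) (undup s).

(* Main.v *)
Require Import Defs.
From mathcomp Require Import all_boot all_algebra.
From mathcomp Require Import zify.
Import GRing.Theory.

Lemma part_le_sumn (s : seq nat) x : x \in s -> x <= sumn s.
Proof.
elim: s => //= y s IH; rewrite inE => /orP[/eqP->|/IH]; first exact: leq_addr.
by move=> h; apply: leq_trans h (leq_addl _ _).
Qed.

Lemma size_le_sumn (s : seq nat) : all (fun x => 0 < x) s -> size s <= sumn s.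
Proof.
elim: s => //= y s IH /andP[y0 /IH h]; rewrite -add1n; exact: leq_add.
Qed.

Lemma mem_partitions m s :
  (s \in partitions m) = is_partition s && (psize s == m).
Proof.
rewrite /partitions mem_filter; apply/idP/idP; first by case/andP.
move=> /andP[ps /eqP sm]; rewrite ps sm eqxx /=.
rewrite mem_undup; move: ps => /andP[_ pos].
have hs : size s <= m by rewrite -sm; apply: size_le_sumn.
have hx : forall i, nth 0 s i < m.+1.
  move=> i; rewrite ltnS; case: (ltnP i (size s)) => hi.
    by rewrite -sm; apply: part_le_sumn; apply: mem_nth.
  by rewrite nth_default.
pose t := mktuple (fun i : 'I_m => (inord (nth 0 s i) : 'I_m.+1)).
have -> : s = [seq x <- map (@nat_of_ord m.+1) (tval t) | 0 < x].
  rewrite /t /= -map_comp.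
  rewrite (eq_map (g := fun i : 'I_m => nth 0 s i)); last first.
    by move=> i /=; rewrite inordK.
  rewrite (map_comp (nth 0 s) val) val_enum_ord.
  rewrite -(subnKC hs) iotaD map_cat filter_cat -/(mkseq _ _) mkseq_nth.
  rewrite (all_filterP pos) (eq_in_filter (a2 := pred0)) ?filter_pred0 ?cats0 //.
  move=> x /mapP[i]; rewrite mem_iota => /andP[hi _] ->.
  by rewrite nth_default.
apply: (map_f (fun t0 : m.-tuple 'I_m.+1 => [seq x <- map (@nat_of_ord m.+1) (tval t0) | 0 < x])).
by rewrite mem_enum.
Qed.

Lemma uniq_partitions m : uniq (partitions m).
Proof. by rewrite filter_uniq // undup_uniq. Qed.
Fixpoint P (K m : nat) : seq (seq nat) :=
  match K with
  | 0 => if m == 0 then [:: [::]] else [::]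
  | K'.+1 => [seq nseq ((m - r) %/ K'.+1) K'.+1 ++ s
               | r <- [seq r <- iota 0 m.+1 | K'.+1 %| m - r], s <- P K' r]
  end.

Lemma geq_trans : transitive geq.
Proof. by move=> a b c h1 h2; apply: leq_trans h2 h1. Qed.

Lemma decomp c s : sorted geq s -> all (fun x => x <= c) s ->
  s = nseq (count_mem c s) c ++ [seq x <- s | x < c].
Proof.
elim: s => //= x s IH hs /andP[xc hall].
have ss : sorted geq s by apply: (path_sorted hs).
case: (ltngtP x c) => [xlt|cx|xc'].
3: by rewrite xc' /=; congr (_ :: _); exact: IH.
2: by move: xc; rewrite leqNgt cx.
rewrite add0n /=.
have hmin := order_path_min geq_trans hs.
rewrite (all_filterP (sub_all _ hmin)); last by move=> y /= h; apply: leq_ltn_trans h xlt.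
have -> : count_mem c s = 0.
  apply/eqP; rewrite -leqn0 leqNgt -has_count; apply/hasP => -[y ys /eqP eyc].
  by move: (allP hmin y ys); rewrite /= eyc leqNgt xlt.
by [].
Qed.

Lemma sorted_nseq_cat j c s : sorted geq s -> all (fun x => x <= c) s ->
  sorted geq (nseq j c ++ s).
Proof.
move=> hs ha; elim: j => //= j IH.
rewrite (path_sortedE geq_trans) IH andbT all_cat ha andbT.
by rewrite all_nseq /= leqnn orbT.
Qed.

Lemma memP K m s :
  (s \in P K m) = [&& is_partition s, sumn s == m & all (fun x => x <= K) s].
Proof.
elim: K m s => [|K IH] m s.
  rewrite /=.
  case: s => [|x s].
    by case: m.
  have -> : (x :: s \in (if m == 0 then [:: [::]] else [::])) = false.
    by case: (m == 0).
  rewrite /is_partition /=; case: x => [|n]; by rewrite /= !andbF.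
apply/idP/idP.
  case/allpairsPdep => r [s' [hr hs' ->]].
  move: hr; rewrite mem_filter mem_iota /= add0n ltnS => /andP[dv rm].
  move: hs'; rewrite IH => /and3P[/andP[ss pos] /eqP sr al].
  have alc : all (fun x => x <= K.+1) s' by apply: sub_all al => x /= h; apply: leqW.
  rewrite /is_partition sorted_nseq_cat //= all_cat sumn_cat sumn_nseq sr.
  rewrite pos mulnC divnK // subnK // eqxx /= all_cat alc !all_nseq /= leqnn.
  by rewrite !orbT.
case/and3P => /andP[ss pos] /eqP sm al.
set j := count_mem K.+1 s; set s' := [seq x <- s | x < K.+1].
have es : s = nseq j K.+1 ++ s' by exact: decomp.
have hsum : sumn s = K.+1 * j + sumn s' by rewrite {1}es sumn_cat sumn_nseq.
apply/allpairsPdep; exists (sumn s'), s'; split => //.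
- rewrite mem_filter mem_iota /= add0n ltnS -sm hsum addnK dvdn_mulr //=.
  exact: leq_addl.
- change (s' \in P K (sumn s')); rewrite IH eqxx /is_partition (sorted_filter geq_trans) //=.
  rewrite !all_filter; apply/andP; split; apply/allP => x xs; apply/implyP => h.
    exact: (allP pos x xs).
  by rewrite -ltnS.
- by rewrite -sm hsum addnK mulKn.
Qed.

Lemma count_nseq_cat c j s : all (fun x => x < c) s ->
  count_mem c (nseq j c ++ s) = j.
Proof.
move=> h; rewrite count_cat count_nseq /= eqxx mul1n.
have -> : count_mem c s = 0.
  apply/eqP; rewrite -leqn0 leqNgt -has_count; apply/hasP => -[y ys /eqP eyc].
  by move: (allP h y ys); rewrite /= eyc ltnn.
by rewrite addn0.
Qed.

Lemma filter_nseq_cat c j s : all (fun x => x < c) s ->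
  [seq x <- nseq j c ++ s | x < c] = s.
Proof.
move=> h; rewrite filter_cat (all_filterP h).
rewrite (eq_in_filter (a2 := pred0)) ?filter_pred0 //.
by move=> x /nseqP[-> _]; rewrite ltnn.
Qed.

Lemma uniqP K m : uniq (P K m).
Proof.
elim: K m => [|K IH] m; first by case: m.
apply: allpairs_uniq_dep.
- by rewrite filter_uniq // iota_uniq.
- by move=> r _; apply: IH.
move=> p1 p2 /allpairsPdep[r1 [s1 [_ hs1 ->]]] /allpairsPdep[r2 [s2 [_ hs2 ->]]] /=.
move: hs1 hs2; rewrite !memP => /and3P[_ /eqP e1 a1] /and3P[_ /eqP e2 a2] E.
have a1' : all (fun x => x < K.+1) s1 by apply: sub_all a1 => x /=; rewrite ltnS.
have a2' : all (fun x => x < K.+1) s2 by apply: sub_all a2 => x /=; rewrite ltnS.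
have es : s1 = s2.
  by rewrite -(filter_nseq_cat (K.+1) ((m - r1) %/ K.+1) _ a1') E filter_nseq_cat.
by rewrite -e1 -e2 es.
Qed.

Local Open Scope ring_scope.

Definition wprod (W : nat -> nat -> int) K (s : seq nat) : int :=
  \prod_(i < K) W i.+1 (mult s i.+1).

Definition H (N : nat) (W : nat -> nat -> int) (i : nat) : {poly int} :=
  \poly_(j < N.+1) W i j.
Definition G N W i : {poly int} := H N W i \Po 'X^i.
Definition ZZ N W K : {poly int} := \prod_(i < K) G N W i.+1.

Lemma coefG N W c k : (0 < c)%N -> (k <= N)%N ->
  (G N W c)`_k = if (c %| k)%N then W c (k %/ c)%N else 0.
Proof.
move=> c0 kN; rewrite /G coef_comp_poly_Xn //; case: ifP => // _.
rewrite coef_poly ltnS (leq_trans (leq_div _ _) kN) //.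
Qed.

Lemma wprod_cat W K j s : all (fun x => x <= K)%N s ->
  wprod W K.+1 (nseq j K.+1 ++ s) = wprod W K s * W K.+1 j.
Proof.
move=> h; rewrite /wprod big_ord_recr /=.
have a' : all (fun x => x < K.+1)%N s by apply: sub_all h => x /=; rewrite ltnS.
rewrite /mult count_nseq_cat //; congr (_ * _); apply: eq_bigr => i _.
rewrite count_cat count_nseq /= eqSS eq_sym (ltn_eqF (ltn_ord i)) mul0n add0n //.
Qed.

Lemma sumP N W K m : (m <= N)%N ->
  \sum_(s <- P K m) wprod W K s = (ZZ N W K)`_m.
Proof.
elim: K m => [|K IH] m mN.
  rewrite /ZZ big_ord0 coef1 /=; case: m mN => [|m] _ /=.
    by rewrite big_seq1 /wprod big_ord0.
  by rewrite big_nil.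
rewrite /ZZ big_ord_recr -/(ZZ N W K) coefM.
rewrite big_allpairs_dep (big_filter (iota 0 m.+1)) big_mkcond.
rewrite -(big_mkord xpredT (fun r => (ZZ N W K)`_r * (G N W K.+1)`_(m - r))).
rewrite /index_iota subn0; apply: eq_big_seq => r; rewrite mem_iota add0n ltnS => /andP[_ rm].
rewrite coefG //; last by apply: leq_trans (leq_subr _ _) mN.
case: ifP => dv; last by rewrite mulr0.
rewrite -IH; last by apply: leq_trans rm mN.
rewrite big_distrl /=; apply: eq_big_seq => s; rewrite memP => /and3P[_ /eqP sr al].
by rewrite wprod_cat.
Qed.

Lemma perm_P K m : perm_eq (P K m) [seq s <- partitions m | all (fun x => x <= K)%N s].
Proof.
apply: uniq_perm; first exact: uniqP.
  by rewrite filter_uniq // uniq_partitions.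
by move=> s; rewrite memP mem_filter mem_partitions /psize; case: (all _ s); rewrite ?andbT ?andbF.
Qed.

Lemma sum_partitions N W m : (m <= N)%N ->
  \sum_(s <- partitions m) wprod W N s = (ZZ N W N)`_m.
Proof.
move=> mN; rewrite -(sumP N W N m mN) (perm_big _ (perm_P N m)) (all_filterP _) //.
apply/allP => s; rewrite mem_partitions => /andP[/andP[_ pos] /eqP sm].
apply/allP => x xs; rewrite (leq_trans _ mN) // -sm.
exact: part_le_sumn.
Qed.

Definition eqn_upto (n : nat) (A B : {poly int}) := forall k, (k <= n)%N -> A`_k = B`_k.

Lemma eqn_upto_mul n A B C D :
  eqn_upto n A B -> eqn_upto n C D -> eqn_upto n (A * C) (B * D).
Proof.
move=> hAB hCD k kn; rewrite !coefM; apply: eq_bigr => j _.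
have jk : (j <= k)%N by rewrite -ltnS.
rewrite hAB ?(leq_trans jk kn) // hCD // (leq_trans (leq_subr _ _) kn) //.
Qed.

Lemma eqn_upto_prod n K (F F' : nat -> {poly int}) :
  (forall i, eqn_upto n (F i) (F' i)) ->
  eqn_upto n (\prod_(i < K) F i) (\prod_(i < K) F' i).
Proof.
move=> h; elim: K => [|K IH]; first by rewrite !big_ord0.
by rewrite !big_ord_recr; apply: eqn_upto_mul.
Qed.

Lemma eqn_upto_comp n c A B : (0 < c)%N -> eqn_upto n A B ->
  eqn_upto n (A \Po 'X^c) (B \Po 'X^c).
Proof.
move=> c0 h k kn; rewrite !coef_comp_poly_Xn //; case: ifP => // _.
by rewrite h // (leq_trans (leq_div _ _) kn).
Qed.

Definition One : nat -> nat -> int := fun _ _ => 1.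
Definition Vsum (U : nat -> nat -> int) : nat -> nat -> int :=
  fun i f => \sum_(g < f.+1) U i g.

Lemma conv_H N U i : eqn_upto N (H N U i * H N One i) (H N (Vsum U) i).
Proof.
move=> k kN; rewrite coefM coef_poly ltnS kN /Vsum; apply: eq_bigr => j _.
have jk : (j <= k)%N by rewrite -ltnS.
rewrite !coef_poly !ltnS (leq_trans jk kN) (leq_trans (leq_subr _ _) kN).
by rewrite /One mulr1.
Qed.

Lemma conv_main N U :
  \sum_(m < N.+1) (ZZ N U N)`_m * (ZZ N One N)`_(N - m) = (ZZ N (Vsum U) N)`_N.
Proof.
rewrite -coefM /ZZ -big_split /=.
apply: (@eqn_upto_prod N N (fun i => G N U i.+1 * G N One i.+1)
   (fun i => G N (Vsum U) i.+1) _ N (leqnn N)).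
move=> i; rewrite /G -comp_polyM; apply: eqn_upto_comp => //; exact: conv_H.
Qed.

Definition sg (g : nat) : int := if (0 < g)%N && ~~ odd g then -1 else 1.
Definition Wk (k : nat) : nat -> nat -> int :=
  fun i f => if (i <= k)%N then (odd f)%:R else 1.
Definition ind (k i g : nat) : int :=
  if (i <= k)%N then ((0 < g)%N)%:R else ((g == 0)%N)%:R.
Definition Uk (k : nat) : nat -> nat -> int := fun i g => ind k i g * sg g.

Lemma Vsum_Uk k i f : Vsum (Uk k) i f = Wk k i f.
Proof.
rewrite /Vsum /Uk /Wk /ind; case: ifP => ik.
  elim: f => [|f IH]; first by rewrite big_ord1 /= mul0r.
  rewrite big_ord_recr /= IH /sg /=.
  by case: (odd f); rewrite /= ?mul1r //.
rewrite big_ord_recl /= /sg /= mulr1 big1 ?addr0 // => g _.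
by rewrite /= mul0r.
Qed.

Lemma find_iota (p : pred nat) N :
  (find p (iota 0 N))%:Z = \sum_(k < N) \prod_(i < k.+1) (~~ p i)%:R.
Proof.
elim: N p => [|N IH] p; first by rewrite big_ord0.
rewrite big_ord_recl /= big_ord1 /=.
have -> : iota 1 N = map (addn 1) (iota 0 N) by rewrite -iotaDl.
rewrite find_map.
have -> : \sum_(i < N) \prod_(i0 < (bump 0 i).+1) ((~~ p i0)%:R : int) =
          (~~ p 0)%:R * \sum_(i < N) \prod_(j < i.+1) (~~ p j.+1)%:R.
  rewrite mulr_sumr; apply: eq_bigr => i _; rewrite big_ord_recl /=.
  by congr (_ * _); apply: eq_bigr => j _.
rewrite -(IH (preim (addn 1) p)).
case: (p 0) => /=; first by rewrite mul0r addr0.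
by rewrite mul1r -PoszD add1n.
Qed.

Lemma mult_big n s x : sumn s = n -> (n < x)%N -> mult s x = 0%N.
Proof.
move=> sn nx; apply/count_memPn; apply/negP => xs.
by move: (part_le_sumn _ _ xs); rewrite sn leqNgt nx.
Qed.

Lemma tpi_expand n s : s \in partitions n ->
  (tpi s)%:Z = \sum_(k < n) wprod (Wk k.+1) n s.
Proof.
rewrite mem_partitions => /andP[_ /eqP sm].
rewrite /tpi sm find_iota big_ord_recr /= big_ord_recr /= (@mult_big n s n.+1 sm) //.
rewrite mulr0 addr0; apply: eq_bigr => k _.
rewrite (big_ord_widen n (fun i => ((~~ ~~ odd (mult s i.+1)) %:R : int))) //.
rewrite big_mkcond /wprod /Wk; apply: eq_bigr => i _.
by rewrite negbK ltnS.
Qed.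

Lemma mult_pos s x : (0 < mult s x)%N = (x \in s).
Proof. by rewrite /mult -has_count has_pred1. Qed.

Lemma prod_bool n (b : 'I_n -> bool) :
  \prod_(i < n) ((b i)%:R : int) = ([forall i, b i])%:R.
Proof.
case: forallP => h.
  by apply: big1 => i _; rewrite h.
have [i hi] : exists i, ~~ b i.
  by apply/existsP; rewrite -negb_forall; apply/forallP.
by rewrite (bigD1 i) //= (negbTE hi) mul0r.
Qed.

Lemma ind_prod n k s :
  \prod_(i < n) ind k.+1 i.+1 (mult s i.+1) =
  ([forall i : 'I_n, ((i < k.+1)%N == (i.+1 \in s))])%:R.
Proof.
rewrite -prod_bool; apply: eq_bigr => i _; rewrite /ind ltnS.
case: ifP => _; first by rewrite mult_pos.
by rewrite -mult_pos lt0n; case: (mult s i.+1 == 0%N).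
Qed.

Lemma C_expand n s : is_partition s -> (sumn s <= n)%N -> s != [::] ->
  \sum_(k < n) \prod_(i < n) ind k.+1 i.+1 (mult s i.+1) = (is_Cpartition s)%:R.
Proof.
case: s => [//|x s'] /andP[ss pos] sn _.
set s := x :: s'.
have allx : all (fun y => y <= x)%N s.
  by rewrite /s /= leqnn /=; exact: (order_path_min geq_trans ss).
have x0 : (0 < x)%N by case/andP: pos.
have xn : (x <= n)%N by apply: leq_trans sn; apply: part_le_sumn; rewrite inE eqxx.
have k0n : (x.-1 < n)%N by rewrite prednK.
under eq_bigr do rewrite ind_prod.
rewrite (bigD1 (Ordinal k0n)) //= big1 ?addr0; last first.
  move=> k /eqP nk; case: forallP => // h; exfalso; apply: nk; apply: val_inj => /=.
  have h1 := h k; rewrite ltnSn /= in h1.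
  have h2 : (x.-1 < k.+1)%N.
    by have := h (Ordinal k0n); rewrite -[nat_of_ord (Ordinal k0n)]/x.-1 prednK // mem_head => /eqP ->.
  have h1' : k.+1 \in s by rewrite -(eqP h1).
  move: (allP allx _ h1') => /= kx.
  lia.
congr (_%:R); rewrite prednK //; congr (nat_of_bool _).
case: (boolP (is_Cpartition s)) => hC; last first.
  apply/negbTE; apply: contra hC => /forallP h.
  apply/allP => y ys; apply/allP => j; rewrite mem_iota => /andP[j1 jy].
  move: (allP allx y ys) => /= yx.
  have jn : (j.-1 < n)%N by lia.
  have := h (Ordinal jn); rewrite -[nat_of_ord (Ordinal jn)]/j.-1 prednK; last by lia.
  by rewrite (_ : (j <= x)%N = true); [move/eqP <- | lia].
apply/forallP => i.
case: (ltnP i x) => hix; rewrite eq_sym.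
  rewrite eqb_id; case: (eqVneq i.+1 x) => [->|ne]; first by rewrite /s inE eqxx.
  have xs : x \in s by exact: mem_head.
  apply: (allP (allP hC x xs)); rewrite mem_iota; apply/andP; split => //.
  move: ne hix; rewrite neq_ltn => /orP[h _|h]; first by lia.
  by lia.
rewrite eqbF_neg; apply/negP => h; move: (allP allx _ h) => /=; lia.
Qed.

Lemma exp_count (q : pred nat) l :
  (-1) ^+ count q l = \prod_(x <- l) (if q x then -1 else 1) :> int.
Proof.
elim: l => [|y l IH]; first by rewrite big_nil.
by rewrite big_cons /= exprD IH; case: (q y); rewrite /= ?expr1 ?expr0.
Qed.

Lemma sign_expand n s : is_partition s -> (sumn s <= n)%N ->
  \prod_(i < n) sg (mult s i.+1) = (-1) ^+ hpi s.
Proof.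
case/andP=> _ pos sn.
rewrite /hpi exp_count -(big_mkord xpredT (fun i => sg (mult s i.+1))).
rewrite /index_iota subn0 -(big_map S xpredT (fun i => sg (mult s i))).
have -> : [seq i.+1 | i <- iota 0 n] = iota 1 n by rewrite -(iotaDl 1).
rewrite (bigID (fun x => x \in s)) /= [X in _ * X]big1 ?mulr1; last first.
  by move=> x /negbTE h; rewrite -mult_pos in h; rewrite /sg h.
rewrite -(big_filter (iota 1 n) (fun i => i \in s)).
rewrite (perm_big (undup s)); last first.
  apply: uniq_perm; [by rewrite filter_uniq // iota_uniq | exact: undup_uniq |].
  move=> x; rewrite mem_filter mem_undup mem_iota.
  case xs: (x \in s) => //=.
  have := allP pos x xs; have := part_le_sumn _ _ xs; lia.
apply: eq_big_seq => x; rewrite mem_undup -mult_pos /sg => ->.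
by [].
Qed.

Lemma rhs_expand n m s : (1 <= m)%N -> (m <= n)%N -> s \in partitions m ->
  (if is_Cpartition s then (-1) ^+ hpi s else 0) = \sum_(k < n) wprod (Uk k.+1) n s.
Proof.
move=> m1 mn; rewrite mem_partitions => /andP[ps /eqP sm].
have sne : s != [::] by apply/eqP => e; move: sm m1; rewrite e /psize /= => <-.
have sn : (sumn s <= n)%N by move: sm; rewrite /psize => ->.
under eq_bigr do rewrite /wprod /Uk big_split /=.
rewrite -mulr_suml C_expand // sign_expand //.
by case: (is_Cpartition s); rewrite ?mul1r ?mul0r.
Qed.

Lemma ZZ_ext N W W' K : (forall i j, W i j = W' i j) -> ZZ N W K = ZZ N W' K.
Proof.
move=> h; rewrite /ZZ /G /H; apply: eq_bigr => i _; congr (_ \Po _).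
by apply/polyP => j; rewrite !coef_poly h.
Qed.

Lemma sum_one (l : seq (seq nat)) : \sum_(s <- l) (1 : int) = (size l)%:Z.
Proof. by elim: l => [|x l IH]; rewrite ?big_nil // big_cons IH /= -PoszD add1n. Qed.

Lemma npart_ZZ n m : (m <= n)%N -> (npart m)%:Z = (ZZ n One n)`_m.
Proof.
move=> mn; rewrite -sum_partitions // -sum_one; apply: eq_bigr => s _.
by rewrite /wprod big1.
Qed.

Lemma ZZ0 n k : (1 <= n)%N -> (ZZ n (Uk k.+1) n)`_0 = 0.
Proof.
move=> n1; rewrite -sum_partitions //; apply: big1_seq => s.
move=> /andP[_]; rewrite mem_partitions => /andP[/andP[_ pos] /eqP sm].
have -> : s = [::].
  case: s pos sm => // x s /= /andP[x0 _]; rewrite /psize /=; lia.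
case: n n1 => // n _; rewrite /wprod big_ord_recl /= /Uk /ind /=.
by rewrite !mul0r.
Qed.

Theorem mainTheorem5 (n : nat) (hn : (1 <= n)%N) :
  ((\sum_(s <- partitions n) tpi s)%N)%:Z =
  \sum_(1 <= m < n.+1)
     \sum_(s <- partitions m | is_Cpartition s)
        (-1) ^+ hpi s * (npart (n - m))%:Z.
Proof.
rewrite (big_morph Posz PoszD (erefl _)).
rewrite (eq_big_seq (fun s => \sum_(k < n) wprod (Wk k.+1) n s)); last first.
  by move=> s hs; exact: tpi_expand.
rewrite exchange_big /=.
under eq_bigr do rewrite sum_partitions //.
transitivity (\sum_(1 <= m < n.+1) \sum_(k < n)
   (ZZ n (Uk k.+1) n)`_m * (ZZ n One n)`_(n - m)); last first.
  apply: eq_big_nat => m /andP[m1 mn]; symmetry; rewrite big_mkcond /=.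
  rewrite (eq_big_seq (fun s => (\sum_(k < n) wprod (Uk k.+1) n s) * (npart (n - m))%:Z)); last first.
    move=> s hs /=; rewrite -(@rhs_expand n m s m1 _ hs) //.
    by case: (is_Cpartition s); rewrite ?mul0r.
  rewrite -mulr_suml exchange_big /= mulr_suml (@npart_ZZ n) ?leq_subr //.
  apply: eq_bigr => k _; rewrite sum_partitions //.
rewrite exchange_big /=; apply: eq_bigr => k _.
rewrite (@ZZ_ext n (Wk k.+1) (Vsum (Uk k.+1)) n (fun i j => esym (Vsum_Uk k.+1 i j))) -conv_main.
rewrite -(big_mkord xpredT (fun m => (ZZ n (Uk k.+1) n)`_m * (ZZ n One n)`_(n - m))).
by rewrite (big_ltn (ltn0Sn n)) /= ZZ0 // mul0r add0r.
Qed.
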